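(* Consider Algorithm MWHVC (described in the context) run on a hypergraph $G=(V,E)$ of rank $f$ with nonnegative vertex weights $w$, with parameters $\varepsilon\in(0,1]$, $\beta=\varepsilon/(f+\varepsilon)$ and multiplier $\alpha>1$. For every $i\ge 0$, the values $\delta_i(e)$ form a feasible edge packing, i.e. $\sum_{e\in E(v)}\delta_i(e)\le w(v)$ for every vertex $v\in V$, and $\delta_i(e)\ge 0$ for every hyperedge $e\in E$.
   Context: Let $G=(V,E)$ be a hypergraph: each hyperedge is a nonempty subset of $V$ of size at most $f$ (rank $f$). Vertices have nonnegative weights $w(v)$. For $v\in V$, $E(v)=\{e\in E: v\in e\}$; $\Delta=\max_v |E(v)|\ge 3$. A hyperedge $e$ is covered by $C\subseteq V$ if $e\cap C\neq\emptyset$. The computation is distributed in synchronous rounds on the bipartite network with node set $V\cup E$ and a link between $v$ and $e$ iff $v\in e$. Parameters: $\varepsilon\in(0,1]$, $\beta=\varepsilon/(f+\varepsilon)$, and a multiplier $\alpha>1$. Algorithm MWHVC: Initialize $C\gets\emptyset$ and $E'(v)\gets E(v)$ for every $v$. Iteration $0$: every hyperedge $e$ sets $\mathrm{deal}_0(e)=\beta\cdot\min_{v\in e} w(v)/|E(v)|$ and $\delta_0(e)=\mathrm{deal}_0(e)$. For $i=1,2,\dots$: (a) every vertex $v\notin C$ (not terminated) checks whether $\sum_{e\in E(v)}\delta_{i-1}(e)\ge(1-\beta)w(v)$; if so, $v$ joins $C$, tells every $e\in E'(v)$ that $e$ is covered, and terminates. (b) Every uncovered hyperedge that receives such a message becomes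 covered, informs all its vertices, and terminates. (c) Every vertex $v\notin C$ that is told $e$ is covered sets $E'(v)\gets E'(v)\setminus\{e\}$; if $E'(v)=\emptyset$, $v$ terminates without joining $C$. (d) Every vertex $v\notin C$ sends ''raise'' to all $e\in E'(v)$ if $\sum_{e\in E'(v)}\mathrm{deal}_{i-1}(e)\le(\beta/\alpha)w(v)$, and otherwise sends ''stuck'' to all $e\in E'(v)$. (e) Every uncovered hyperedge $e$ sets $\mathrm{deal}_i(e)=\mathrm{deal}_{i-1}(e)$ if it received some ''stuck'' message, and $\mathrm{deal}_i(e)=\alpha\cdot\mathrm{deal}_{i-1}(e)$ otherwise, and $\delta_i(e)=\delta_{i-1}(e)+\mathrm{deal}_i(e)$. If $e$ becomes covered in iteration $j$, then by convention $\delta_i(e)=\delta_{j-1}(e)$ for all $i\ge j$. *)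

(* Defs.v *)
From HB Require Import structures.
From mathcomp Require Import all_boot all_order all_algebra.
Set Implicit Arguments. Unset Strict Implicit. Unset Printing Implicit Defensive.
Import Order.TTheory GRing.Theory Num.Theory.
Local Open Scope ring_scope.

Section MWHVC.
Variables (R : realFieldType) (V : finType) (E : {set {set V}}).
Variables (f : nat) (w : V -> R) (eps alpha : R).

Definition Ev (v : V) : {set {set V}} := [set e in E | v \in e].

Definition beta : R := eps / (f%:R + eps).

Record state := State {
  inC : {set V};
  term : {set V};
  cov : {set {set V}};
  Ep : V -> {set {set V}};
  deal : {set V} -> R;
  delta : {set V} -> R
}.

Definition minratio (e : {set V}) : R :=
  match [pick v in e] with
  | Some v0 => \big[Num.min/(w v0 / #|Ev v0|%:R)]_(v in e) (w v / #|Ev v|%:R)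
  | None => 0
  end.

Definition init : state :=
  State set0 set0 set0 Ev (fun e => beta * minratio e) (fun e => beta * minratio e).

Definition step (s : state) : state :=
  let J := [set v | (v \notin term s) &&
                    ((1 - beta) * w v <= \sum_(e in Ev v) delta s e)] in
  let C' := inC s :|: J in
  let newcov := [set e in E | (e \notin cov s) &&
                   [exists v in J, e \in Ep s v]] in
  let cov' := cov s :|: newcov in
  let Ep' := fun v => if v \in C' then Ep s v else Ep s v :\: newcov in
  let term' := term s :|: J :|:
      [set v | (v \notin C') && (v \notin term s) &&
               [exists e in newcov, v \in e] && (Ep' v == set0)] in
  let stuck := fun e : {set V} => [exists v, [&& v \notin C', v \notin term', e \in Ep' v &
                   (beta / alpha * w v < \sum_(e' in Ep' v) deal s e')]] in
  let deal' := fun e => if (e \in E) && (e \notin cov')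
                        then (if stuck e then deal s e else alpha * deal s e)
                        else deal s e in
  let delta' := fun e => if (e \in E) && (e \notin cov')
                         then delta s e + deal' e else delta s e in
  State C' term' cov' Ep' deal' delta'.

Definition state_at (i : nat) : state := iter i step init.

End MWHVC.

(* Main.v *)
Require Import Defs.
From HB Require Import structures.
From mathcomp Require Import all_boot all_order all_algebra.
From mathcomp Require Import ring.
Import Order.TTheory GRing.Theory Num.Theory.
Local Open Scope ring_scope.

Section P.
Variables (R : realFieldType) (V : finType) (E : {set {set V}}).
Variables (f : nat) (w : V -> R) (eps alpha : R).
Hypotheses (hw : forall v, 0 <= w v) (heps : 0 < eps) (halpha : 1 < alpha).

Local Notation beta := (beta f eps).
Local Notation Ev := (Ev E).
Local Notation state := (state R V).

Definition sJ (s : state) := [set v | (v \notin term s) &&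
                    ((1 - beta) * w v <= \sum_(e in Ev v) delta s e)].
Definition sC (s : state) := inC s :|: sJ s.
Definition snew (s : state) := [set e in E | (e \notin cov s) &&
                   [exists v in sJ s, e \in Ep s v]].
Definition scov s := cov s :|: snew s.
Definition sEp (s : state) := fun v => if v \in sC s then Ep s v else Ep s v :\: snew s.
Definition sterm (s : state) := term s :|: sJ s :|:
      [set v | (v \notin sC s) && (v \notin term s) &&
               [exists e in snew s, v \in e] && (sEp s v == set0)].
Definition sstuck (s : state) := fun e : {set V} => [exists v, [&& v \notin sC s, v \notin sterm s, e \in sEp s v &
                   (beta / alpha * w v < \sum_(e' in sEp s v) deal s e')]].
Definition sdeal (s : state) := fun e => if (e \in E) && (e \notin scov s)
                        then (if sstuck s e then deal s e else alpha * deal s e)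
                        else deal s e.
Definition sdelta (s : state) := fun e => if (e \in E) && (e \notin scov s)
                         then delta s e + sdeal s e else delta s e.

Lemma stepE s : step E f w eps alpha s =
  State (sC s) (sterm s) (scov s) (sEp s) (sdeal s) (sdelta s).
Proof. by []. Qed.

Record Inv (s : state) : Prop := {
 i_Cterm : inC s \subset term s;
 i_Ep_sub : forall v, Ep s v \subset Ev v;
 i_cov1 : forall v e, e \in Ev v -> e \notin Ep s v -> e \in cov s;
 i_cov2 : forall v e, v \in term s -> e \in Ev v -> e \in cov s;
 i_disj : forall v e, v \notin inC s -> e \in Ep s v -> e \notin cov s;
 i_deal : forall e, 0 <= deal s e;
 i_dealsum : forall v, v \notin term s -> \sum_(e in Ep s v) deal s e <= beta * w v;
 i_delta : forall e, 0 <= delta s e;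
 i_feas : forall v, \sum_(e in Ev v) delta s e <= w v }.
Arguments i_Cterm [s].
Arguments i_Ep_sub [s].
Arguments i_cov1 [s].
Arguments i_cov2 [s].
Arguments i_disj [s].
Arguments i_deal [s].
Arguments i_dealsum [s].
Arguments i_delta [s].
Arguments i_feas [s].

Lemma beta_ge0 : 0 <= beta.
Proof.
apply: divr_ge0; first exact: ltW.
exact: addr_ge0 (ler0n _ _) (ltW heps).
Qed.

Lemma beta_le1 : beta <= 1.
Proof.
have h : 0 < f%:R + eps by apply: ltr_wpDl.
by rewrite /Defs.beta ler_pdivrMr // mul1r lerDr.
Qed.

Lemma minratio_ge0 e : 0 <= minratio E w e.
Proof.
rewrite /minratio; case: pickP => // v0 _.
apply: (big_ind (fun x => 0 <= x)).
- by rewrite divr_ge0.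
- by move=> x y hx hy; rewrite /Num.min; case: ifP.
- by move=> v _; rewrite divr_ge0.
Qed.

Lemma minratio_le (e : {set V}) (v : V) : v \in e -> minratio E w e <= w v / #|Ev v|%:R.
Proof.
move=> hv; rewrite /minratio; case: pickP => [v0 _|h]; last by rewrite h in hv.
by rewrite (bigD1 v) //= ge_min lexx.
Qed.

Lemma sum_sub_le (A B : {set {set V}}) (F : {set V} -> R) :
  B \subset A -> (forall e, e \in A -> 0 <= F e) ->
  \sum_(e in B) F e <= \sum_(e in A) F e.
Proof.
move=> hBA hF; rewrite [X in _ <= X](big_setID B) /= (setIidPr hBA) lerDl.
by apply: sumr_ge0 => e; rewrite inE => /andP[_ /hF].
Qed.

Lemma Inv_init : Inv (init E f w eps).
Proof.
split => //=.
- by move=> v e ->.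
- by move=> v e; rewrite in_set0.
- by move=> v e _ _; rewrite in_set0.
- by move=> e; rewrite mulr_ge0 ?beta_ge0 ?minratio_ge0.
- move=> v _.
  apply: (@le_trans _ _ (\sum_(e in Ev v) beta * (w v / #|Ev v|%:R))).
    apply: ler_sum => e; rewrite inE => /andP[_ he].
    by rewrite ler_wpM2l ?beta_ge0 ?minratio_le.
  rewrite sumr_const -(mulr_natr (beta * (w v / #|Ev v|%:R))).
  have [->|n0] := eqVneq #|Ev v| 0%N; first by rewrite mulr0 mulr_ge0 ?beta_ge0.
  rewrite -mulrA mulfVK ?pnatr_eq0 //.
- by move=> e; rewrite mulr_ge0 ?beta_ge0 ?minratio_ge0.
- move=> v.
  apply: (@le_trans _ _ (\sum_(e in Ev v) beta * (w v / #|Ev v|%:R))).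
    apply: ler_sum => e; rewrite inE => /andP[_ he].
    by rewrite ler_wpM2l ?beta_ge0 ?minratio_le.
  rewrite sumr_const -(mulr_natr (beta * (w v / #|Ev v|%:R))).
  have [->|n0] := eqVneq #|Ev v| 0%N; first by rewrite mulr0.
  rewrite -mulrA mulfVK ?pnatr_eq0 //.
  by rewrite ler_piMl ?beta_le1.
Qed.

Section Step.
Variable s : state.
Hypothesis hI : Inv s.

Lemma EvP v e : e \in Ev v -> (e \in E) && (v \in e).
Proof. by rewrite inE. Qed.

Lemma C_term v : v \in sC s -> v \in sterm s.
Proof.
rewrite /sC /sterm !inE => /orP[hC|->]; last by rewrite orbT.
by rewrite (subsetP (i_Cterm hI) _ hC).
Qed.

Lemma J_term v : v \in sJ s -> v \in sterm s.
Proof. by move=> hJ; apply: C_term; rewrite /sC inE hJ orbT. Qed.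

Lemma notterm_notC v : v \notin sterm s -> v \notin sC s.
Proof. by apply: contra; apply: C_term. Qed.

Lemma notterm_old v : v \notin sterm s -> v \notin term s.
Proof. by apply: contra => h; rewrite /sterm !inE h. Qed.

Lemma notC_inC v : v \notin sC s -> v \notin inC s.
Proof. by apply: contra => h; rewrite /sC inE h. Qed.

Lemma notC_J v : v \notin sC s -> v \notin sJ s.
Proof. by apply: contra => h; rewrite /sC inE h orbT. Qed.

Lemma sEp_notC v : v \notin sC s -> sEp s v = Ep s v :\: snew s.
Proof. by rewrite /sEp => /negbTE ->. Qed.

Lemma sEp_sub v : sEp s v \subset Ep s v.
Proof. by rewrite /sEp; case: ifP => _ //; apply: subsetDl. Qed.

Lemma n_Ep_sub v : sEp s v \subset Ev v.
Proof. exact: subset_trans (sEp_sub v) (i_Ep_sub hI v). Qed.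

Lemma n_cov1 v e : e \in Ev v -> e \notin sEp s v -> e \in scov s.
Proof.
rewrite /sEp /scov; case: ifP => _ he hn; first by rewrite inE (i_cov1 hI _ _ he hn).
move: hn; rewrite !inE negb_and negbK => /orP[hnew|hn]; first by rewrite hnew orbT.
by rewrite (i_cov1 hI _ _ he hn).
Qed.

Lemma n_cov2 v e : v \in sterm s -> e \in Ev v -> e \in scov s.
Proof.
move=> hv he.
suff : (e \in cov s) || (e \in snew s) by rewrite /scov in_setU.
have [hEp|hEp] := boolP (e \in Ep s v); last first.
  by rewrite (i_cov1 hI _ _ he hEp).
move: hv; rewrite /sterm !in_setU => /orP[/orP[ht|hJ]|h3].
- by rewrite (i_cov2 hI _ _ ht he).
- case hc: (e \in cov s) => //=.
  rewrite /snew inE; move/EvP: he => /andP[-> _]; rewrite hc /=.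
  by apply/existsP; exists v; rewrite hJ hEp.
- move: h3; rewrite inE => /andP[_ /eqP h0].
  have hn : e \notin sEp s v by rewrite h0 inE.
  by move: (n_cov1 _ _ he hn); rewrite /scov in_setU.
Qed.

Lemma n_disj v e : v \notin sC s -> e \in sEp s v -> e \notin scov s.
Proof.
move=> hv; rewrite (sEp_notC _ hv) inE => /andP[hn hE].
by rewrite /scov inE negb_or hn (i_disj hI _ _ (notC_inC _ hv) hE).
Qed.

Lemma n_deal e : 0 <= sdeal s e.
Proof.
have ha : 0 <= alpha by apply: le_trans (ltW halpha).
rewrite /sdeal; case: ifP => _; last exact: (i_deal hI).
by case: ifP => _; rewrite ?mulr_ge0 ?(i_deal hI).
Qed.

Lemma sdeal_le e : sdeal s e <= alpha * deal s e.
Proof.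
have hd := i_deal hI e.
have hle : deal s e <= alpha * deal s e by rewrite ler_peMl // ltW.
by rewrite /sdeal; case: ifP => _ //; case: ifP.
Qed.

Lemma n_dealsum v : v \notin sterm s ->
  \sum_(e in sEp s v) sdeal s e <= beta * w v.
Proof.
move=> hv; have hC := notterm_notC _ hv.
have ha0 : 0 < alpha by apply: lt_trans halpha.
have [hP|hP] := boolP (beta / alpha * w v < \sum_(e' in sEp s v) deal s e').
  have -> : \sum_(e in sEp s v) sdeal s e = \sum_(e in sEp s v) deal s e.
    apply: eq_bigr => e he.
    have heE : e \in E by move/subsetP: (n_Ep_sub v) => /(_ e he) /EvP /andP[].
    rewrite /sdeal heE (n_disj _ _ hC he) /=.
    suff -> : sstuck s e by [].
    by apply/existsP; exists v; rewrite hC hv he hP.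
  apply: le_trans (i_dealsum hI _ (notterm_old _ hv)).
  apply: sum_sub_le; first exact: sEp_sub.
  by move=> e _; apply: (i_deal hI).
apply: (@le_trans _ _ (\sum_(e in sEp s v) alpha * deal s e)).
  by apply: ler_sum => e _; apply: sdeal_le.
rewrite -mulr_sumr.
have -> : beta * w v = alpha * (beta / alpha * w v).
  by field; rewrite gt_eqF.
by rewrite ler_wpM2l ?(ltW ha0) // leNgt.
Qed.

Lemma n_delta e : 0 <= sdelta s e.
Proof.
rewrite /sdelta; case: ifP => _; last exact: (i_delta hI).
by rewrite addr_ge0 ?n_deal ?(i_delta hI).
Qed.

Lemma sdelta_cov e : e \in scov s -> sdelta s e = delta s e.
Proof. by rewrite /sdelta => ->; rewrite andbF. Qed.

Lemma n_feas v : \sum_(e in Ev v) sdelta s e <= w v.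
Proof.
have [ht|ht] := boolP (v \in term s).
  rewrite (eq_bigr (delta s)) ?(i_feas hI) // => e he.
  by rewrite sdelta_cov // /scov inE (i_cov2 hI _ _ ht he).
have [hJ|hJ] := boolP (v \in sJ s).
  rewrite (eq_bigr (delta s)) ?(i_feas hI) // => e he.
  by rewrite sdelta_cov // (n_cov2 _ _ (J_term _ hJ) he).
have hC : v \notin sC s.
  rewrite /sC inE negb_or hJ andbT; apply: contra ht.
  exact: (subsetP (i_Cterm hI)).
have hlt : \sum_(e in Ev v) delta s e < (1 - beta) * w v.
  by move: hJ; rewrite /sJ inE ht /= ltNge.
pose ex e := if (e \in E) && (e \notin scov s) then sdeal s e else 0.
rewrite (eq_bigr (fun e => delta s e + ex e)); last first.
  by move=> e _; rewrite /sdelta /ex; case: ifP; rewrite ?addr0.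
rewrite big_split /=.
have hX : \sum_(e in Ev v) ex e <= beta * w v.
  rewrite (big_setID (sEp s v)) /= (setIidPr (n_Ep_sub v)).
  rewrite [X in _ + X]big1 ?addr0; last first.
    move=> e; rewrite inE => /andP[hn he].
    by rewrite /ex (n_cov1 _ _ he hn) andbF.
  apply: (@le_trans _ _ (\sum_(e in sEp s v) sdeal s e)).
    by apply: ler_sum => e _; rewrite /ex; case: ifP => _; rewrite ?n_deal.
  have [hT|hT] := boolP (v \in sterm s); last exact: n_dealsum.
  move: hT; rewrite /sterm !in_setU (negbTE ht) (negbTE hJ) /= inE => /andP[_ /eqP ->].
  by rewrite big_set0 mulr_ge0 ?beta_ge0.
have -> : w v = (1 - beta) * w v + beta * w v by ring.
exact: lerD (ltW hlt) hX.
Qed.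

Lemma Inv_step : Inv (step E f w eps alpha s).
Proof.
rewrite stepE; split => /=.
- by apply/subsetP => v; apply: C_term.
- exact: n_Ep_sub.
- exact: n_cov1.
- exact: n_cov2.
- exact: n_disj.
- exact: n_deal.
- exact: n_dealsum.
- exact: n_delta.
- exact: n_feas.
Qed.
End Step.

Lemma Inv_all i : Inv (state_at E f w eps alpha i).
Proof.
elim: i => [|i IH]; first exact: Inv_init.
by rewrite /state_at iterS; apply: Inv_step.
Qed.

End P.

Theorem mainTheorem2 (R : realFieldType) (V : finType) (E : {set {set V}})
  (f : nat) (w : V -> R) (eps alpha : R)
  (hE : forall e, e \in E -> (e != set0) && (#|e| <= f)%N)
  (hw : forall v, 0 <= w v)
  (heps : 0 < eps <= 1)
  (halpha : 1 < alpha)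
  (hDelta : (3 <= \max_(v : V) #|Ev E v|)%N) :
  forall i : nat,
    (forall v : V,
       \sum_(e in Ev E v) delta (state_at E f w eps alpha i) e <= w v) /\
    (forall e, e \in E -> 0 <= delta (state_at E f w eps alpha i) e).
Proof.
move=> i; have hI := @Inv_all R V E f w eps alpha hw (proj1 (andP heps)) halpha i.
case: hI => _ _ _ _ _ _ _ hd hf; split => // e _; exact: hd.
Qed.
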